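(* Let $S\subseteq\Sigma^n$ be a double-MDS-code with canonical parameters $k$ and $\{K_1,\ldots,K_k\}$, $n_j=|K_j|$, and let $C\subseteq S$ be an $(n,2)_4$ MDS code. (a) If $2<k<n$, or if $k=2$ with $n_1>1$ and $n_2>1$, then $C$ is decomposable. (b) If $k=n$, then $C$ is semilinear.
   Context: Let $\Sigma=\{0,1,2,3\}$, $[n]=\{1,\ldots,n\}$. An $i$-line of $\Sigma^n$ is a set of the four words that agree in all coordinates except the $i$th; a line is an $i$-line for some $i$. An $(n,2)_4$ MDS code is a set $C\subseteq\Sigma^n$ meeting every line in exactly one element. A double-code is a set meeting every line in $0$ or $2$ elements; a double-MDS-code is a set meeting every line in exactly $2$ elements; a double-code is complementable if contained in a double-MDS-code, and prime if complementable, nonempty and not partitionable into two or more nonempty double-codes. An $n$-quasigroup is a map $g:\Sigma^n\to\Sigma$ such that, for each $i$ and each fixing of the other arguments, $x_i\mapsto g(\bar x)$ is a bijection of $\Sigma$. $\chi_S$ denotes the characteristic function, $\oplus$ addition mod 2, and for $K=\{i_1<\cdots<i_m\}\subseteq[n]$, $\bar x_K=(x_{i_1},\ldots,x_{i_m})$. A double-MDS-code $D\subseteq\Sigma^m$ is linear if $\chi_D(y_1,\ldots,y_m)=\chi_1(y_1)\oplus\cdots\oplus\chi_m(y_m)$ for some $\chi_i:\Sigma\to\{0,1\}$; an MDS code is semilinear if it is contained in some linear double-MDS-code. An $(n,2)_4$ MDS code $C$ is decomposable if there are $m\in\{2,\ldots,n-2\}$, an $m$-quasigroup $g'$, an $(n-m)$-quasigroup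 $g''$ and a permutation $\sigma$ of $[n]$ with $C=\{\bar x: g'(x_{\sigma(1)},\ldots,x_{\sigma(m)})=g''(x_{\sigma(m+1)},\ldots,x_{\sigma(n)})\}$. Canonical parameters: every double-MDS-code $S\subseteq\Sigma^n$ has a unique representation $\chi_S(\bar x)=\bigoplus_{j=1}^k\chi_{S_j}(\bar x_{K_j})\oplus\sigma_0$ with $k\in[n]$, $\{K_1,\ldots,K_k\}$ a partition of $[n]$ into nonempty sets, $S_j\subseteq\Sigma^{|K_j|}$ prime double-MDS-codes containing $\bar 0$, and $\sigma_0\in\{0,1\}$; $k$ and $\{K_j\}$ are the canonical parameters of $S$. *)

(* Defs.v *)
From mathcomp Require Import all_boot all_order all_fingroup.
Set Implicit Arguments. Unset Strict Implicit. Unset Printing Implicit Defensive.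

Definition word (m : nat) := {ffun 'I_m -> 'I_4}.

Definition upd m (x : word m) (i : 'I_m) (a : 'I_4) : word m :=
  [ffun j => if j == i then a else x j].

Definition line m (x : word m) (i : 'I_m) : {set word m} :=
  [set y : word m | [forall j : 'I_m, (j != i) ==> (y j == x j)]].

Definition MDS_code m (C : {set word m}) : Prop :=
  forall (x : word m) (i : 'I_m), #|C :&: line x i| = 1.

Definition double_code m (S : {set word m}) : Prop :=
  forall (x : word m) (i : 'I_m), #|S :&: line x i| = 0 \/ #|S :&: line x i| = 2.

Definition double_MDS_code m (S : {set word m}) : Prop :=
  forall (x : word m) (i : 'I_m), #|S :&: line x i| = 2.

Definition complementable m (S : {set word m}) : Prop :=
  double_code S /\ exists D : {set word m}, double_MDS_code D /\ S \subset D.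

Definition prime_code m (S : {set word m}) : Prop :=
  complementable S /\ S != set0 /\
  ~ (exists P : {set {set word m}},
        partition P S /\ 2 <= #|P| /\
        forall T, T \in P -> T != set0 /\ double_code T).

Definition zero_word m : word m := [ffun => ord0].

(* \bar x_K : the subword of x on K, coordinates in increasing order
   (enum of a set of ordinals lists it increasingly) *)
Definition subword m (x : word m) (K : {set 'I_m}) : word #|K| :=
  [ffun t => x (enum_val t)].

(* S has canonical parameters k and {K_j}: the (unique) representation
   chi_S(x) = (+)_j chi_{S_j}(x_{K_j}) (+) sigma0 with K a partition of [n]
   into k nonempty sets and S_j prime double-MDS-codes containing 0. *)
Definition canonical_repr n (S : {set word n}) (k : nat) (K : 'I_k -> {set 'I_n})
  (Sj : forall j : 'I_k, {set word #|K j|}) (sigma0 : bool) : Prop :=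
  [/\ 1 <= k <= n,
      (forall j, K j != set0) /\
      (forall j1 j2, j1 != j2 -> [disjoint K j1 & K j2]),
      (forall i : 'I_n, exists j, i \in K j),
      (forall j, double_MDS_code (Sj j) /\ prime_code (Sj j) /\ zero_word _ \in Sj j)
    & forall x : word n,
        (x \in S) = (\big[addb/false]_(j < k) (subword x (K j) \in Sj j)) (+) sigma0].

Definition has_canonical_parameters n (S : {set word n}) (k : nat)
  (K : 'I_k -> {set 'I_n}) : Prop :=
  exists (Sj : forall j : 'I_k, {set word #|K j|}) (sigma0 : bool),
    @canonical_repr n S k K Sj sigma0.

Definition quasigroup m (g : word m -> 'I_4) : Prop :=
  forall (x : word m) (i : 'I_m), injective (fun a => g (upd x i a)).

Definition decomposable n (C : {set word n}) : Prop :=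
  exists (m : nat) (Hm : m <= n), 2 <= m <= n - 2 /\
  exists (g1 : word m -> 'I_4) (g2 : word (n - m) -> 'I_4) (sigma : {perm 'I_n}),
    [/\ quasigroup g1, quasigroup g2 &
        C = [set x : word n |
               g1 [ffun t : 'I_m => x (sigma (widen_ord Hm t))] ==
               g2 [ffun t : 'I_(n - m) => x (sigma (cast_ord (subnKC Hm) (rshift m t)))]]].

Definition linear_code m (D : {set word m}) : Prop :=
  exists chi : 'I_m -> 'I_4 -> bool,
    forall y : word m, (y \in D) = \big[addb/false]_(i < m) chi i (y i).

Definition semilinear n (C : {set word n}) : Prop :=
  exists D : {set word n}, [/\ double_MDS_code D, linear_code D & C \subset D].

(* Main.v *)
Require Import Defs.
From mathcomp Require Import all_boot all_order all_fingroup zify.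
Set Implicit Arguments. Unset Strict Implicit. Unset Printing Implicit Defensive.


Section Lines.
Variable m : nat.
Implicit Types (x y : word m) (i j : 'I_m) (a b : 'I_4) (X : {set word m}).

Lemma upd_eq x i a : upd x i a i = a.
Proof. by rewrite /upd ffunE eqxx. Qed.

Lemma upd_neq x i a j : j != i -> upd x i a j = x j.
Proof. by rewrite /upd ffunE => /negbTE ->. Qed.

Lemma upd_id x i : upd x i (x i) = x.
Proof. by apply/ffunP=> j; rewrite /upd ffunE; case: eqP => // ->. Qed.

Lemma upd_upd x i a b : upd (upd x i a) i b = upd x i b.
Proof. by apply/ffunP=> j; rewrite /upd !ffunE; case: eqP. Qed.

Lemma upd_comm x i j a b : i != j -> upd (upd x i a) j b = upd (upd x j b) i a.
Proof.
move=> ij; apply/ffunP=> l; rewrite /upd !ffunE.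
case: (eqVneq l j) => [lj|lj]; case: (eqVneq l i) => [li|li] //.
by move: ij; rewrite -li -lj eqxx.
Qed.

Lemma upd_inj x i : injective (upd x i).
Proof. by move=> a b /(congr1 (fun y => y i)); rewrite !upd_eq. Qed.

Lemma mem_line x i y : (y \in line x i) = (y == upd x i (y i)).
Proof.
rewrite inE; apply/forallP/eqP => [H|->].
  apply/ffunP=> j; rewrite /upd ffunE; case: eqP => [->//|/eqP nj].
  by have /implyP/(_ nj)/eqP := H j.
by move=> j; apply/implyP=> nj; rewrite /upd ffunE (negbTE nj).
Qed.

Lemma line_eq x i : line x i = [set upd x i a | a : 'I_4].
Proof.
apply/setP=> y; rewrite mem_line; apply/eqP/imsetP=> [e|[a _ ->]].
  by exists (y i).
by rewrite upd_eq.
Qed.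

Lemma card_line X x i : #|X :&: line x i| = #|[set a | upd x i a \in X]|.
Proof.
rewrite -(card_imset _ (@upd_inj x i)); apply: eq_card => y.
rewrite inE line_eq; apply/andP/imsetP=> [[yX /imsetP[a _ ya]]|[a]].
  by exists a; rewrite // inE -ya.
by rewrite inE => aX ->; split=> //; apply/imsetP; exists a.
Qed.

Lemma cnt_compl X x i :
  #|[set a | upd x i a \in ~: X]| = 4 - #|[set a | upd x i a \in X]|.
Proof.
have -> : [set a | upd x i a \in ~: X] = ~: [set a | upd x i a \in X].
  by apply/setP=> a; rewrite !inE.
by rewrite cardsCs setCK card_ord.
Qed.

End Lines.

Definition cnt m (X : {set word m}) x i := #|[set a | upd x i a \in X]|.

Lemma MDS_cnt m (C : {set word m}) : MDS_code C <-> forall x i, cnt C x i = 1.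
Proof. by split=> H x i; move: (H x i); rewrite /cnt card_line. Qed.

Lemma dMDS_cnt m (C : {set word m}) : double_MDS_code C <-> forall x i, cnt C x i = 2.
Proof. by split=> H x i; move: (H x i); rewrite /cnt card_line. Qed.

Lemma dcode_cnt m (C : {set word m}) :
  double_code C <-> forall x i, cnt C x i = 0 \/ cnt C x i = 2.
Proof. by split=> H x i; move: (H x i); rewrite /cnt card_line. Qed.

Lemma cnt1P (P : pred 'I_4) : #|[set a | P a]| = 1 -> exists a, forall b, P b = (b == a).
Proof.
move/eqP/cards1P=> [a Ha]; exists a => b.
by move/setP/(_ b): Ha; rewrite !inE.
Qed.

Lemma cnt2P (P : pred 'I_4) : #|[set a | P a]| = 2 ->
  exists a b, a != b /\ forall c, P c = (c == a) || (c == b).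
Proof.
move/eqP/cards2P=> [a [b [ab Ha]]]; exists a, b; split=> // c.
by move/setP/(_ c): Ha; rewrite !inE.
Qed.

Lemma cnt_set1 (P : pred 'I_4) a : (forall b, P b = (b == a)) -> #|[set b | P b]| = 1.
Proof.
move=> H; suff -> : [set b | P b] = [set a] by rewrite cards1.
by apply/setP=> b; rewrite !inE H.
Qed.

Lemma cnt_set2 (P : pred 'I_4) a b : a != b ->
  (forall c, P c = (c == a) || (c == b)) -> #|[set c | P c]| = 2.
Proof.
move=> ab H; suff -> : [set c | P c] = [set a; b] by rewrite cards2 ab.
by apply/setP=> c; rewrite !inE H.
Qed.

Lemma cnt_set0 (P : pred 'I_4) : (forall c, P c = false) -> #|[set c | P c]| = 0.
Proof.
move=> H; suff -> : [set c | P c] = set0 by rewrite cards0.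
by apply/setP=> c; rewrite !inE H.
Qed.


Lemma prime_split m (A T : {set word m}) : prime_code A -> T \subset A ->
  double_code T -> double_code (A :\: T) -> T = set0 \/ T = A.
Proof.
move=> [_ [_ np]] TA dT dD.
case: (eqVneq T set0) => [->|T0]; first by left.
case: (eqVneq (A :\: T) set0) => [D0|D0].
  right; apply/eqP; rewrite eqEsubset TA /=; apply/subsetP=> x xA.
  by apply: contraT => xT; move/setP/(_ x): D0; rewrite !inE xT xA.
exfalso; apply: np; exists [set T; A :\: T].
have TD : T != A :\: T.
  apply: contraNneq T0 => e; apply/eqP/setP=> x; rewrite inE.
  by apply/negP=> xT; move: (xT); rewrite {1}e inE xT.
split; last split.
- rewrite /partition; apply/and3P; split.
  + rewrite /cover big_setU1 ?inE //= big_set1; apply/eqP/setP=> x.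
    rewrite !inE; case: (boolP (x \in T)) => //= xT.
    by move/subsetP: TA => /(_ x xT) ->.
  + have dj : [disjoint T & A :\: T].
      by rewrite disjoints_subset; apply/subsetP=> x xT; rewrite !inE xT.
    apply/trivIsetP=> B B'; rewrite !inE => /orP[]/eqP-> /orP[]/eqP->;
      rewrite ?eqxx // => _; by rewrite // disjoint_sym.
  + by rewrite !inE negb_or !(eq_sym set0) T0 D0.
- by rewrite cards2 TD.
- by move=> B; rewrite !inE => /orP[]/eqP->; split.
Qed.


Section Split.
Variable m : nat.
Implicit Types (x y : word m) (i j : 'I_m) (a b : 'I_4) (X D E M : {set word m}).

Lemma fill2 E D x i a0 : E \subset D -> double_code E -> cnt D x i = 2 ->
  upd x i a0 \in E -> forall a, (upd x i a \in E) = (upd x i a \in D).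
Proof.
move=> ED /dcode_cnt /(_ x i) dE cD a0E.
have sub : [set a | upd x i a \in E] \subset [set a | upd x i a \in D].
  by apply/subsetP=> a; rewrite !inE => /(subsetP ED).
have ne : cnt E x i != 0.
  by rewrite /cnt cards_eq0; apply/set0Pn; exists a0; rewrite inE.
have cE : cnt E x i = 2 by case: dE ne => ->.
have : [set a | upd x i a \in E] == [set a | upd x i a \in D].
  by rewrite eqEcard sub -/(cnt E x i) -/(cnt D x i) cE cD.
by move/eqP/setP=> H a; move: (H a); rewrite !inE.
Qed.

Lemma split_dc D M M' : (forall x i, cnt D x i = 2) -> MDS_code M -> MDS_code M' ->
  M \subset D -> M' \subset D ->
  double_code [set w in D | (w \in M) == (w \in M')] /\
  double_code (D :\: [set w in D | (w \in M) == (w \in M')]).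
Proof.
move=> cD /MDS_cnt cM /MDS_cnt cM' MD M'D.
suff H : forall x i, (cnt [set w in D | (w \in M) == (w \in M')] x i = 2 /\
     cnt (D :\: [set w in D | (w \in M) == (w \in M')]) x i = 0) \/
     (cnt [set w in D | (w \in M) == (w \in M')] x i = 0 /\
     cnt (D :\: [set w in D | (w \in M) == (w \in M')]) x i = 2).
  by split; apply/dcode_cnt=> x i; case: (H x i) => -[e1 e2]; rewrite ?e1 ?e2; auto.
move=> x i; rewrite /cnt.
have [a1 [a2 [a12 Da]]] := cnt2P (cD x i).
have [b Mb] := cnt1P (cM x i).
have [b' Mb'] := cnt1P (cM' x i).
have bD : (b == a1) || (b == a2).
  by rewrite -Da; apply: (subsetP MD); rewrite Mb.
have b'D : (b' == a1) || (b' == a2).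
  by rewrite -Da; apply: (subsetP M'D); rewrite Mb'.
case: (eqVneq b b') => [eb|bb'].
  rewrite -eb in Mb'.
  left; split.
    apply: (cnt_set2 a12) => c; rewrite !inE Da Mb Mb'.
    by case: ((c == a1) || (c == a2)); rewrite ?eqxx.
  apply: cnt_set0 => c; rewrite !inE Da Mb Mb'.
  by case: ((c == a1) || (c == a2)); rewrite ?eqxx.
have key : forall c, (c == a1) || (c == a2) -> ((c == b) == (c == b')) = false.
  move=> c; case/orP: bD => /eqP eb; case/orP: b'D => /eqP eb'; subst;
    rewrite ?eqxx // in bb' *;
    by case/orP=> /eqP ->; rewrite ?eqxx ?(negbTE a12) ?(eq_sym a2) ?(negbTE a12).
right; split.
  apply: cnt_set0 => c; rewrite !inE Da Mb Mb'.
  by case: (boolP ((c == a1) || (c == a2))) => // /key ->.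
apply: (cnt_set2 a12) => c; rewrite !inE Da Mb Mb'.
by case: (boolP ((c == a1) || (c == a2))) => // /key ->.
Qed.

End Split.


Section Compl.
Variable m : nat.
Implicit Types (x y : word m) (i j : 'I_m) (a b : 'I_4) (X D E M : {set word m}).

Definition ttE E x j := [exists a, upd x j a \in E].

Variables (A E : {set word m}).
Hypothesis cA : forall x i, cnt A x i = 2.
Hypothesis EA : E \subset ~: A.
Hypothesis dE : double_code E.

Lemma cAc x i : cnt (~: A) x i = 2.
Proof. by rewrite /cnt cnt_compl -/(cnt A x i) cA. Qed.

Lemma plane x i j b : x \in A -> upd x i b \in A -> b != x i -> j != i ->
  ttE E x j -> ttE E (upd x i b) j.
Proof.
move=> xA x'A bx ji /existsP[a0 a0E].
apply: contraT => nt.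
have F0 := fill2 EA dE (cAc x j) a0E.
pose R0 := [set a | upd x j a \in ~: A].
pose R1 := [set a | upd (upd x i b) j a \in ~: A].
have c0 : #|R0| = 2 by apply: cAc.
have c1 : #|R1| = 2 by apply: cAc.
have dj : R0 :&: R1 = set0.
  apply/setP=> a; rewrite !inE; apply/negP=> /andP[a0' a1].
  have yE : upd x j a \in E by rewrite F0 inE.
  have e : upd (upd x i b) j a = upd (upd x j a) i b by rewrite upd_comm // eq_sym.
  have yE' : upd (upd x j a) i (upd x j a i) \in E by rewrite upd_id.
  have F1 := fill2 EA dE (cAc (upd x j a) i) yE'.
  have : upd (upd x i b) j a \in E by rewrite e F1 -e inE.
  by move: nt; rewrite negb_exists => /forallP/(_ a) /negP.
have sub : R0 :|: R1 \subset [set~ x j].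
  apply/subsetP=> a; rewrite !inE => /orP[]; apply: contraL => /eqP->.
    by rewrite upd_id negbK.
  by rewrite -{1}(upd_neq x b ji) upd_id negbK.
have := subset_leq_card sub.
by rewrite cardsU dj cards0 c0 c1 cardsC1 card_ord.
Qed.

Lemma plane_eq x i j b : x \in A -> upd x i b \in A -> b != x i ->
  ttE E x j = ttE E (upd x i b) j.
Proof.
move=> xA x'A bx.
have [->|ji] := eqVneq j i.
  by apply/existsP/existsP=> -[a Ha]; exists a; rewrite ?upd_upd // in Ha *.
apply/idP/idP; first exact: plane.
have e : x = upd (upd x i b) i (x i) by rewrite upd_upd upd_id.
move=> H; rewrite e; apply: plane => //; rewrite -?e // upd_eq eq_sym //.
Qed.

End Compl.

Lemma compl_split m (A E : {set word m}) (i0 : 'I_m) :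
  double_MDS_code A -> prime_code A -> E \subset ~: A -> double_code E ->
  E = set0 \/ E = ~: A.
Proof.
move=> /dMDS_cnt cA pA EA dE.
case: (eqVneq E set0) => [->|E0]; first by left.
case: (eqVneq (~: A :\: E) set0) => [D0|D0].
  right; apply/eqP; rewrite eqEsubset EA /=; apply/subsetP=> x xA.
  apply: contraT => xT; move/setP/(_ x): D0; rewrite !inE (negbTE xT) /=.
  by move: xA; rewrite inE => /negbTE ->.
exfalso.
have [e1 e1E] := set0Pn _ E0.
have [e2] := set0Pn _ D0; rewrite inE => /andP[e2E e2A].
have [x0 x0A] : exists x0, x0 \in A.
  by case: pA => _ [/set0Pn [x0 ?] _]; exists x0.
pose T := [set x in A | [forall j, ttE E x j == ttE E x0 j]].
have TA : T \subset A by apply/subsetP=> x; rewrite inE => /andP[].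
have key : forall x i, (cnt T x i = 2 /\ cnt (A :\: T) x i = 0) \/
                       (cnt T x i = 0 /\ cnt (A :\: T) x i = 2).
  move=> x i; rewrite /cnt.
  have [a1 [a2 [a12 Da]]] := cnt2P (cA x i).
  have u1A : upd x i a1 \in A by rewrite Da eqxx.
  have u2A : upd x i a2 \in A by rewrite Da eqxx orbT.
  have eT : (upd x i a2 \in T) = (upd x i a1 \in T).
    rewrite !inE u1A u2A /=; apply: eq_forallb => j.
    have -> : upd x i a2 = upd (upd x i a1) i a2 by rewrite upd_upd.
    by rewrite -(plane_eq cA EA dE j u1A) ?upd_upd ?upd_eq // eq_sym.
  have memT : forall c, (upd x i c \in T) = ((c == a1) || (c == a2)) && (upd x i a1 \in T).
    move=> c; case: (boolP ((c == a1) || (c == a2))) => /= [/orP[]/eqP->|nc] //.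
    by apply/negP=> /(subsetP TA); rewrite Da (negbTE nc).
  case: (boolP (upd x i a1 \in T)) => u1T; [left|right]; split.
  - by apply: (cnt_set2 a12) => c; rewrite memT u1T andbT.
  - by apply: cnt_set0 => c; rewrite in_setD memT u1T andbT Da; case: (_ || _).
  - by apply: cnt_set0 => c; rewrite memT (negbTE u1T) andbF.
  - by apply: (cnt_set2 a12) => c; rewrite in_setD memT (negbTE u1T) andbF /= Da.
have dT : double_code T by apply/dcode_cnt=> x i; case: (key x i) => -[-> _]; auto.
have dAT : double_code (A :\: T) by apply/dcode_cnt=> x i; case: (key x i) => -[_ ->]; auto.
have x0T : x0 \in T by rewrite inE x0A; apply/forallP=> j.
have TeqA : T = A.
  by case: (prime_split pA TA dT dAT) => // T0; move: x0T; rewrite T0 inE.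
have [a1 [a2 [a12 Da1]]] := cnt2P (cA e1 i0).
have x1A : upd e1 i0 a1 \in A by rewrite Da1 eqxx.
have [b1 [b2 [b12 Db1]]] := cnt2P (cA e2 i0).
have x2A : upd e2 i0 b1 \in A by rewrite Db1 eqxx.
have t1 : ttE E (upd e1 i0 a1) i0 by apply/existsP; exists (e1 i0); rewrite upd_upd upd_id.
have : ttE E (upd e2 i0 b1) i0.
  move: x1A x2A; rewrite -TeqA !inE => /andP[_ /forallP/(_ i0)/eqP f1].
  by move=> /andP[_ /forallP/(_ i0)/eqP ->]; rewrite -f1.
case/existsP=> a; rewrite upd_upd => aE.
have := fill2 EA dE (cAc cA e2 i0) aE (e2 i0).
by rewrite upd_id e2A (negbTE e2E).
Qed.


Section Core.
Variables (n : nat) (K0 : {set 'I_n}) (A : {set word #|K0|}) (beta : word n -> bool)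
  (C : {set word n}).
Hypothesis dA : double_MDS_code A.
Hypothesis pA : prime_code A.
Hypothesis CS : forall x, x \in C -> (subword x K0 \in A) (+) beta x.
Hypothesis betaL : forall x y : word n, (forall i, i \notin K0 -> x i = y i) -> beta x = beta y.
Hypothesis MC : MDS_code C.
Variable k0 : 'I_n.
Hypothesis Hk0 : k0 \in K0.

Local Notation m := #|K0|.

Definition emb (z : word n) (w : word m) : word n :=
  [ffun i => if i \in K0 then w (enum_rank_in Hk0 i) else z i].

Lemma subword_emb z w : subword (emb z w) K0 = w.
Proof.
by apply/ffunP=> t; rewrite /subword /emb !ffunE enum_valP enum_valK_in.
Qed.

Lemma emb_subword z : emb z (subword z K0) = z.
Proof.
apply/ffunP=> i; rewrite /subword /emb !ffunE; case: ifP => // iK.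
by rewrite enum_rankK_in.
Qed.

Lemma emb_out z w i : i \notin K0 -> emb z w i = z i.
Proof. by rewrite /emb ffunE => /negbTE ->. Qed.

Lemma emb_upd z w t a : emb z (upd w t a) = upd (emb z w) (enum_val t) a.
Proof.
apply/ffunP=> i; rewrite /emb /upd !ffunE.
case: (boolP (i \in K0)) => iK.
  congr (if _ then _ else _); apply/eqP/eqP=> [<-|->]; last exact: enum_valK_in.
  by rewrite enum_rankK_in.
case: eqP => // e; move: iK; rewrite e enum_valP //.
Qed.

Lemma emb_updL z w l a : l \notin K0 -> emb (upd z l a) w = upd (emb z w) l a.
Proof.
move=> lK; apply/ffunP=> i; rewrite /emb /upd !ffunE.
case: (boolP (i \in K0)) => iK //.
by case: eqP => // e; move: lK; rewrite -e iK.
Qed.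

Lemma beta_emb z w : beta (emb z w) = beta z.
Proof. by apply: betaL => i; apply: emb_out. Qed.

Definition Cz z := [set w | emb z w \in C].

Lemma Cz_cnt z w t : cnt (Cz z) w t = cnt C (emb z w) (enum_val t).
Proof. by rewrite /cnt; apply: eq_card => a; rewrite !inE emb_upd. Qed.

Lemma Cz_MDS z : MDS_code (Cz z).
Proof. by apply/MDS_cnt=> w t; rewrite Cz_cnt; apply: (MDS_cnt C).1. Qed.

Definition D (b : bool) := if b then ~: A else A.

Lemma inD b w : (w \in D b) = (w \in A) (+) b.
Proof. by case: b; rewrite /D ?inE ?addbT ?addbF. Qed.

Lemma Cz_sub z : Cz z \subset D (beta z).
Proof.
apply/subsetP=> w; rewrite inE => /CS; rewrite subword_emb beta_emb inD.
by case: (w \in A); case: (beta z).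
Qed.

Lemma cD b w t : cnt (D b) w t = 2.
Proof.
case: b; rewrite /D; last by apply: (dMDS_cnt A).1.
by rewrite /cnt cnt_compl -/(cnt A w t) (dMDS_cnt A).1.
Qed.

Lemma Dsplit b (T : {set word m}) : T \subset D b -> double_code T -> double_code (D b :\: T) ->
  T = set0 \/ T = D b.
Proof.
case: b => /= TD dT dDT; last exact: prime_split.
exact: (compl_split (enum_rank_in Hk0 k0)).
Qed.

Lemma dichotomy z z0 : beta z = beta z0 ->
  (forall w, w \in D (beta z) -> (w \in Cz z) = (w \in Cz z0)) \/
  (forall w, w \in D (beta z) -> (w \in Cz z) = ~~ (w \in Cz z0)).
Proof.
move=> bz.
have s1 := Cz_sub z; have s2 := Cz_sub z0; rewrite -bz in s2.
have [dT dDT] := split_dc (@cD (beta z)) (Cz_MDS z) (Cz_MDS z0) s1 s2.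
have TD : [set w in D (beta z) | (w \in Cz z) == (w \in Cz z0)] \subset D (beta z).
  by apply/subsetP=> w; rewrite inE => /andP[].
case: (Dsplit TD dT dDT) => [T0|TD'].
  right=> w wD; move/setP/(_ w): T0; rewrite !inE wD /=.
  by case: (emb z w \in C); case: (emb z0 w \in C).
left=> w wD; move/setP/(_ w): TD'; rewrite !inE wD /=.
by move/eqP.
Qed.

Definition w0 : word m := [ffun => ord0].
Definition t0 : 'I_m := enum_rank_in Hk0 k0.

Lemma Cz_out z b w : w \in D b -> beta z != b -> (w \in Cz z) = false.
Proof.
move=> wD bz; apply/negP=> /(subsetP (Cz_sub z)); move: wD; rewrite !inD.
by case: (beta z) b bz => -[] //= _; case: (w \in A).
Qed.

Lemma star w : exists a, forall z, (w \in Cz z) = (upd w0 t0 a \in Cz z).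
Proof.
pose b := ~~ (w \in A).
have wD : w \in D b by rewrite inD /b; case: (w \in A).
have [a1 [a2 [a12 Da]]] := cnt2P (cD b w0 t0).
case: (boolP [exists z0, beta z0 == b]) => [/existsP[z0 /eqP bz0]|].
  have [ast Has] := cnt1P ((MDS_cnt _).1 (Cz_MDS z0) w0 t0).
  have asD : upd w0 t0 ast \in D b.
    by rewrite -bz0; apply: (subsetP (Cz_sub z0)); rewrite Has.
  pose a' := if a1 == ast then a2 else a1.
  have a'D : upd w0 t0 a' \in D b by rewrite Da /a'; case: ifP; rewrite eqxx ?orbT.
  have a'ast : a' != ast.
    by rewrite /a'; case: ifP => [/eqP <-|/negbT //]; rewrite eq_sym.
  exists (if w \in Cz z0 then ast else a') => z.
  set c := if _ then _ else _.
  have cD' : upd w0 t0 c \in D b by rewrite /c; case: ifP.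
  have cz0 : (upd w0 t0 c \in Cz z0) = (w \in Cz z0).
    by rewrite Has /c; case: ifP; rewrite ?eqxx // (negbTE a'ast).
  case: (eqVneq (beta z) b) => bz; last by rewrite !(Cz_out _ bz).
  have bzz : beta z = beta z0 by rewrite bz bz0.
  case: (dichotomy bzz) => H; rewrite !H ?bz ?cz0 //.
rewrite negb_exists => /forallP Hb.
exists a1 => z; have bz := Hb z.
by rewrite !(Cz_out _ bz) // Da eqxx.
Qed.

Definition Gw (w : word m) : 'I_4 :=
  odflt ord0 [pick a | [forall z, (w \in Cz z) == (upd w0 t0 a \in Cz z)]].

Lemma Gw_spec w z : (w \in Cz z) = (upd w0 t0 (Gw w) \in Cz z).
Proof.
rewrite /Gw; case: pickP => [a /forallP /(_ z) /eqP //|H].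
have [a Ha] := star w; have := H a.
by move/negbT/negP; case; apply/forallP=> z'; rewrite Ha.
Qed.

Definition Hf (z : word n) : 'I_4 := odflt ord0 [pick a | upd w0 t0 a \in Cz z].

Lemma Hf_spec z a : (upd w0 t0 a \in Cz z) = (a == Hf z).
Proof.
have [ast Has] := cnt1P ((MDS_cnt _).1 (Cz_MDS z) w0 t0).
rewrite /Hf; case: pickP => [b Hb|H]; last by move: (H ast); rewrite Has eqxx.
by rewrite Has; move: Hb; rewrite Has => /eqP ->.
Qed.

Lemma memC x : (x \in C) = (Gw (subword x K0) == Hf x).
Proof.
have -> : (x \in C) = (subword x K0 \in Cz x) by rewrite inE emb_subword.
by rewrite Gw_spec Hf_spec.
Qed.

Lemma Hf_out (z z' : word n) : (forall i, i \notin K0 -> z i = z' i) -> Hf z = Hf z'.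
Proof.
move=> H; have e : Cz z = Cz z'.
  apply/setP=> w; rewrite !inE; congr (_ \in C); apply/ffunP=> i.
  by rewrite /emb !ffunE; case: ifP => // /negbT /H.
by rewrite /Hf e.
Qed.

Lemma C_uniq x i a b : upd x i a \in C -> upd x i b \in C -> a = b.
Proof.
have [c Hc] := cnt1P ((MDS_cnt _).1 MC x i).
by rewrite !Hc => /eqP -> /eqP ->.
Qed.

Variable l0 : 'I_n.
Hypothesis Hl0 : l0 \in ~: K0.

Lemma Gw_inj w t : injective (fun a => Gw (upd w t a)).
Proof.
move=> a b /= e.
pose z1 : word n := [ffun => ord0].
have lK : l0 \notin K0 by move: Hl0; rewrite inE.
have [c Hc] := cnt1P ((MDS_cnt _).1 MC (emb z1 (upd w t a)) l0).
have inC : emb (upd z1 l0 c) (upd w t a) \in C by rewrite emb_updL // Hc.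
have aC : upd w t a \in Cz (upd z1 l0 c) by rewrite inE.
have bC : upd w t b \in Cz (upd z1 l0 c) by rewrite Gw_spec -e -Gw_spec.
have [d Hd] := cnt1P ((MDS_cnt _).1 (Cz_MDS (upd z1 l0 c)) w t).
by move: aC bC; rewrite !Hd => /eqP -> /eqP ->.
Qed.

Lemma Hf_inj z l : l \notin K0 -> injective (fun a => Hf (upd z l a)).
Proof.
move=> lK a b /= e.
have h1 := Hf_spec (upd z l a) (Hf (upd z l a)); rewrite eqxx inE emb_updL // in h1.
have h2 := Hf_spec (upd z l b) (Hf (upd z l b)); rewrite eqxx inE emb_updL // -e in h2.
exact: C_uniq h1 h2.
Qed.

Lemma core_decomp : 2 <= m -> 2 <= n - m -> decomposable C.
Proof.
move=> m2 nm2.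
have Hm : m <= n by rewrite -[n in _ <= n]card_ord max_card.
have Hc : #|~: K0| = n - m.
  by have := cardsC K0; rewrite card_ord; lia.
pose s := enum K0 ++ enum (~: K0).
have ss : size s = n by rewrite size_cat -!cardE Hc subnKC.
have us : uniq s.
  rewrite cat_uniq !enum_uniq /= andbT; apply/hasPn => i.
  by rewrite !mem_enum inE.
pose f (u : 'I_n) := nth k0 s u.
have finj : injective f.
  by move=> u v /eqP; rewrite /f nth_uniq ?ss // => /eqP; apply: ord_inj.
pose sg := perm finj.
have sl : forall t, sg (widen_ord Hm t) = enum_val t.
  by move=> t; rewrite permE /f /= nth_cat -cardE ltn_ord (enum_val_nth k0).
have sr : forall t, sg (cast_ord (subnKC Hm) (rshift m t)) = enum_val (cast_ord (esym Hc) t).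
  move=> t; rewrite permE /f /= nth_cat -cardE ltnNge leq_addr /= addKn.
  by rewrite (enum_val_nth k0).
pose emb2 (v : word (n - m)) : word n :=
  [ffun i => if i \in K0 then ord0 else v (cast_ord Hc (enum_rank_in Hl0 i))].
pose g2 v := Hf (emb2 v).
have e2 : forall v t a, emb2 (upd v t a) = upd (emb2 v) (enum_val (cast_ord (esym Hc) t)) a.
  move=> v t a; apply/ffunP=> i; rewrite /emb2 /upd !ffunE.
  case: (boolP (i \in K0)) => iK.
    case: eqP => // ei; have := enum_valP (cast_ord (esym Hc) t).
    by rewrite -ei inE iK.
  have iK' : i \in ~: K0 by rewrite inE.
  congr (if _ then _ else _); apply/eqP/eqP=> [<-|->].
    by rewrite cast_ordK enum_rankK_in.
  by rewrite enum_valK_in cast_ordKV.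
exists m, Hm; split; first by apply/andP; split=> //; lia.
exists Gw, g2, sg; split.
- by move=> w t; apply: Gw_inj.
- move=> v t a b /=; rewrite /g2 !e2; apply: Hf_inj.
  by have := enum_valP (cast_ord (esym Hc) t); rewrite inE.
- apply/setP=> x; rewrite inE memC.
  have -> : [ffun t : 'I_m => x (sg (widen_ord Hm t))] = subword x K0.
    by apply/ffunP=> t; rewrite /subword !ffunE sl.
  have -> : g2 [ffun t : 'I_(n - m) => x (sg (cast_ord (subnKC Hm) (rshift m t)))] = Hf x.
    rewrite /g2; apply: Hf_out => i iK.
    have iK' : i \in ~: K0 by rewrite inE.
    by rewrite /emb2 ffunE (negbTE iK) ffunE sr cast_ordK enum_rankK_in.
  by [].
Qed.

End Core.


Lemma partb (n : nat) (S : {set word n}) (K : 'I_n -> {set 'I_n})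
  (Sj : forall j : 'I_n, {set word #|K j|}) (s0 : bool) (C : {set word n}) :
  0 < n ->
  (forall j, K j != set0) ->
  (forall j1 j2, j1 != j2 -> [disjoint K j1 & K j2]) ->
  (forall x : word n,
     (x \in S) = (\big[addb/false]_(j < n) (subword x (K j) \in Sj j)) (+) s0) ->
  double_MDS_code S -> C \subset S -> semilinear C.
Proof.
move=> n0 Kne Kdis Sdef dS CS.
pose f (j : 'I_n) := odflt j [pick i in K j].
have fK : forall j, f j \in K j.
  move=> j; rewrite /f; case: pickP => [i //|H].
  by have /set0Pn[i iK] := Kne j; move: (H i); rewrite iK.
have KK : forall j j' i, i \in K j -> i \in K j' -> j = j'.
  move=> j j' i ij ij'; apply/eqP; apply: contraT => jj'.
  by have := disjointFr (Kdis _ _ jj') ij; rewrite ij'.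
have finj : injective f by move=> j j' e; apply: (KK _ _ (f j)); rewrite // e.
have Kf : forall j i, (i \in K j) = (i == f j).
  move=> j i; apply/idP/eqP=> [iK|->] //.
  have /codomP[j' ej] := inj_card_onto finj (leqnn _) i.
  by rewrite ej in iK *; rewrite (KK _ _ _ iK (fK j')).
have sw : forall (y : word n) j, subword y (K j) = [ffun _ => y (f j)].
  by move=> y j; apply/ffunP=> t; rewrite /subword !ffunE; move: (enum_valP t); rewrite Kf => /eqP ->.
pose j0 : 'I_n := Ordinal n0.
pose chi (i : 'I_n) (a : 'I_4) :=
  [exists j, (f j == i) && ([ffun _ : 'I_#|K j| => a] \in Sj j)] (+) ((i == f j0) && s0).
exists S; split=> //.
exists chi => y.
rewrite Sdef /chi big_split /=.
congr (_ (+) _).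
  rewrite [in RHS](reindex_inj finj) /=; apply: eq_bigr => j _.
  rewrite sw; apply/idP/existsP=> [H|[j' /andP[/eqP e H]]].
    by exists j; rewrite eqxx.
  by move: (finj _ _ e) H => ->.
rewrite (bigD1 (f j0)) //= eqxx andTb big1 ?addbF // => i /negbTE ->.
by [].
Qed.

Unset Implicit Arguments.

Theorem corollary5 (n : nat) (S : {set word n}) (k : nat) (K : 'I_k -> {set 'I_n})
  (C : {set word n}) :
  double_MDS_code S -> has_canonical_parameters S K ->
  MDS_code C -> C \subset S ->
  ( ((2 < k < n) \/ (k = 2 /\ forall j : 'I_k, 1 < #|K j|)) -> decomposable C )
  /\ ( k = n -> semilinear C ).
Proof.
move=> dS [Sj [s0 [/andP[k1 kn] [Kne Kdis] Kcov Sprop Sdef]]] MC CS.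
split; last first.
  move=> e; subst k; apply: (partb (K := K) (Sj := Sj) (s0 := s0)) => //.
have disjF : forall j j' i, j != j' -> i \in K j -> (i \in K j') = false.
  by move=> j j' i jj' iK; apply: disjointFr (Kdis _ _ jj') iK.
move=> hk.
have [j0 [m2 c2]] : exists j0, 2 <= #|K j0| /\ 2 <= #|~: K j0|.
  case: hk => [/andP[k2 kn']|[k2 K2]]; last first.
    subst k; exists ord0; split; first exact: K2.
    have sub : K ord_max \subset ~: K ord0.
      by apply/subsetP=> i iK; rewrite inE (disjF ord_max).
    exact: leq_trans (K2 ord_max) (subset_leq_card sub).
  have k0' : 0 < k by lia.
  have [j0 m2] : exists j0, 2 <= #|K j0|.
    case: (boolP [exists j, 1 < #|K j|]) => [/existsP[j Hj]|]; first by exists j.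
    rewrite negb_exists => /forallP Hle.
    pose h (i : 'I_n) := odflt (Ordinal k0') [pick j | i \in K j].
    have hK : forall i, i \in K (h i).
      move=> i; rewrite /h; case: pickP => [j //|H].
      by have [j ij] := Kcov i; move: (H j); rewrite ij.
    have hinj : injective h.
      move=> i i' e; have := hK i'; rewrite -e => hi'.
      by have := Hle (h i); rewrite -leqNgt => /card_le1_eqP/(_ i i' (hK i) hi').
    by have := leq_card h hinj; rewrite !card_ord; lia.
  exists j0; split=> //.
  have cQ : #|[set~ j0]| = k.-1 by rewrite cardsC1 card_ord.
  have [j1 j1Q] : exists j1, j1 \in [set~ j0].
    by apply/set0Pn; rewrite -card_gt0 cQ; lia.
  have [j2 j2Q] : exists j2, j2 \in [set~ j0] :\ j1.
    apply/set0Pn; rewrite -card_gt0.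
    by have := cardsD1 j1 [set~ j0]; rewrite j1Q cQ; lia.
  move: j2Q; rewrite !inE => /andP[j21 j20]; move: j1Q; rewrite !inE => j10.
  have sub : K j1 :|: K j2 \subset ~: K j0.
    by apply/subsetP=> i; rewrite !inE => /orP[] iK; [rewrite (disjF j1) | rewrite (disjF j2)].
  have c12 : #|K j1 :|: K j2| = #|K j1| + #|K j2|.
    rewrite cardsU disjoint_setI0 ?cards0 ?subn0 //.
    by apply: Kdis; rewrite eq_sym.
  have := subset_leq_card sub; rewrite c12.
  have := Kne j1; have := Kne j2; rewrite -!card_gt0; lia.
have [k0 Hk0] := set0Pn _ (Kne j0).
have [l0 Hl0] : exists l0, l0 \in ~: K j0.
  by apply/set0Pn; rewrite -card_gt0; lia.
have [dA [pA _]] := Sprop j0.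
pose beta (x : word n) :=
  (\big[addb/false]_(j < k | j != j0) (subword x (K j) \in Sj j)) (+) s0.
apply: (core_decomp (beta := beta) dA pA _ _ MC Hk0 Hl0) => //.
- move=> x /(subsetP CS); rewrite Sdef (bigD1 j0) //= /beta addbA.
  exact: id.
- move=> x y H; rewrite /beta; congr (_ (+) _); apply: eq_bigr => j jj0.
  suff -> : subword x (K j) = subword y (K j) by [].
  apply/ffunP=> t; rewrite /subword !ffunE; apply: H.
  by rewrite (disjF j) ?enum_valP.
- by have := cardsC (K j0); rewrite card_ord; lia.
Qed.
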